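(* Let $E$ be a Banach space and let $C\subset E$. Suppose either (a) $T:C\to C$ is firmly nonexpansive, or (b) $C$ is convex and $T:C\to C$ is averaged nonexpansive. If there exists a nonempty bounded set $D\subset C$ such that $T(D)=D$, then every point of $D$ is a fixed point of $T$, i.e. $D\subset \mathrm{Fix}\,T=\{x\in C: Tx=x\}$. In particular, $\mathrm{Fix}\,T$ is nonempty.
   Context: A mapping $T:C\to C$ is firmly nonexpansive if $\|Tx-Ty\|\le \|\alpha(x-y)+(1-\alpha)(Tx-Ty)\|$ for all $x,y\in C$ and all $\alpha\in(0,1)$. For convex $C$, a mapping $T:C\to C$ is averaged nonexpansive if $T=\alpha I+(1-\alpha)S$ for some $\alpha\in(0,1)$ and some nonexpansive $S:C\to C$ (i.e. $\|Sx-Sy\|\le\|x-y\|$ for all $x,y\in C$), where $I$ is the identity. *)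

(* Defs.v *)
From HB Require Import structures.
From mathcomp Require Import all_boot all_order all_algebra.
From mathcomp Require Import all_classical all_reals all_analysis.
Set Implicit Arguments. Unset Strict Implicit. Unset Printing Implicit Defensive.
Import Order.TTheory GRing.Theory Num.Theory.
Import numFieldNormedType.Exports.
Local Open Scope classical_set_scope.
Local Open Scope ring_scope.

(* Maps T : E -> E regarded as maps C -> C. *)
Definition maps_into {E : Type} (C : set E) (T : E -> E) : Prop :=
  forall x, C x -> C (T x).

Definition nonexpansive_on {R : realType} {E : normedModType R}
  (C : set E) (S : E -> E) : Prop :=
  forall x y, C x -> C y -> `|S x - S y| <= `|x - y|.

Definition firmly_nonexpansive {R : realType} {E : normedModType R}
  (C : set E) (T : E -> E) : Prop :=
  maps_into C T /\
  forall x y, C x -> C y -> forall a : R, 0 < a -> a < 1 ->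
    `|T x - T y| <= `|a *: (x - y) + (1 - a) *: (T x - T y)|.

Definition convex_subset {R : realType} {E : normedModType R} (C : set E) : Prop :=
  forall x y, C x -> C y -> forall t : R, 0 <= t -> t <= 1 ->
    C (t *: x + (1 - t) *: y).

Definition averaged_nonexpansive {R : realType} {E : normedModType R}
  (C : set E) (T : E -> E) : Prop :=
  maps_into C T /\
  exists a : R, 0 < a /\ a < 1 /\
  exists S : E -> E, maps_into C S /\ nonexpansive_on C S /\
    forall x, C x -> T x = a *: x + (1 - a) *: S x.

Definition bounded_subset {R : realType} {E : normedModType R} (D : set E) : Prop :=
  exists M : R, forall x, D x -> `|x| <= M.

Definition Fix {E : Type} (C : set E) (T : E -> E) : set E :=
  [set x | C x /\ T x = x].

(* Main.v *)
Require Import Defs.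
From HB Require Import structures.
From mathcomp Require Import all_boot all_order all_algebra.
From mathcomp Require Import all_classical all_reals all_analysis.
From mathcomp Require Import ring lra.
Import Order.TTheory GRing.Theory Num.Theory.
Import numFieldNormedType.Exports.
Local Open Scope classical_set_scope.
Local Open Scope ring_scope.
Definition psi (R : realType) (n K i k : nat) : R :=
  2 * n%:R * k%:R + K%:R * (K%:R * k%:R - k%:R ^+ 2 - k%:R - 2 * i%:R + K%:R + 2 * n%:R).

Lemma kob_bound (R : realType) (E : normedModType R) (z : nat -> E) (B : R) (n K : nat) :
  (forall i j, `|z i.+1 - z j.+1| <= `|(1/2:R) *: (z i - z j) + (1 - 1/2) *: (z i.+1 - z j.+1)|) ->
  (forall i j, `|z i - z j| <= B) -> (0 < K)%N ->
  forall i, (i <= n)%N -> forall k, (k <= K)%N ->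
  (2 * n%:R * K%:R) * `|z i - z (i + k)%N| <= B * psi R n K i k.
Proof.
move=> hf hB hK.
have B0 : 0 <= B by apply: le_trans (hB 0%N 0%N); rewrite subrr normr0.
have rec : forall i k, 2 * `|z i.+1 - z (i.+1 + k.+1)%N| <=
    `|z i.+1 - z (i.+1 + k)%N| + `|z i - z (i + k.+2)%N|.
  move=> i k; have := hf i (i + k.+1)%N.
  rewrite !addSn !addnS.
  set u := z i - _; set v := z i.+1 - _ => h.
  have e : (1/2:R) *: u + (1 - 1/2) *: v = (1/2:R) *: ((z i - z (i + k).+2) + (z i.+1 - z (i + k).+1)).
    rewrite /u /v (_ : (1 - 1/2 : R) = 1/2); last by field.
    rewrite -scalerDr; congr (_ *: _).
    rewrite addrACA [X in _ = X]addrACA; congr (_ + _); by rewrite addrC.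
  have : `|v| <= 1/2 * `|(z i - z (i + k).+2) + (z i.+1 - z (i + k).+1)|.
    by rewrite -[1/2 : R]ger0_norm // -normrZ -e.
  have := ler_normD (z i - z (i + k).+2) (z i.+1 - z (i + k).+1).
  have := ler_normD (z i - z (i + k.+2)%N) (z i.+1 - z (i.+1 + k)%N).
  lra.
have hK' : (1%:R : R) <= K%:R by rewrite ler_nat.
elim=> [|i IH] hi.
  move=> k hk; rewrite add0n.
  have hk' : (k%:R : R) <= K%:R by rewrite ler_nat.
  have k0 : (0 : R) <= k%:R by [].
  have n0 : (0 : R) <= n%:R by [].
  have hb := hB 0%N k.
  have : 2 * n%:R * K%:R <= psi R n K 0 k.
    rewrite /psi; have : (0:R) <= K%:R * (K%:R - k%:R) * (k%:R + 1) by
      apply: mulr_ge0; [apply: mulr_ge0 => //; lra | lra].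
    nra.
  move=> hp; have hn : (0:R) <= 2 * n%:R * K%:R by [].
  have := ler_wpM2l hn hb; have := ler_wpM2r B0 hp; rewrite [B * _]mulrC; lra.
have hi' : (i.+1%:R : R) <= n%:R by rewrite ler_nat.
have IH' := IH (ltnW hi).
elim=> [|k IHk] hk.
  rewrite addn0 subrr normr0 mulr0; apply: mulr_ge0 => //.
  rewrite /psi; have : (0:R) <= K%:R by []. nra.
have hk' : (k.+1%:R : R) <= K%:R by rewrite ler_nat.
case: (ltnP k.+1 K) => hkK.
  have h1 := IHk (ltnW hk).
  have h2 := IH' k.+2 hkK.
  have h3 := rec i k.
  have e : psi R n K i.+1 k + psi R n K i k.+2 = 2 * psi R n K i.+1 k.+1.
    rewrite /psi -!natr1; ring.
  have hn : (0:R) <= 2 * n%:R * K%:R by [].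
  nra.
have eK : k.+1 = K by apply/eqP; rewrite eqn_leq hk hkK.
have hb := hB i.+1 (i.+1 + k.+1)%N.
have : 2 * n%:R * K%:R <= psi R n K i.+1 k.+1.
  rewrite /psi eK; have : (0:R) <= K%:R by []. nra.
have hn : (0:R) <= 2 * n%:R * K%:R by [].
nra.
Qed.

Lemma comb_id (R : realType) (V : normedModType R) (a : R) (p q r : V) :
  p - (a *: q + (1 - a) *: r) = a *: (p - q) + (1 - a) *: (p - r).
Proof.
rewrite [a *: (p - q)]scalerBr [(1 - a) *: (p - r)]scalerBr [(1 - a) *: p]scalerBl scale1r.
rewrite opprD !addrA; congr (_ - _).
by rewrite addrAC [a *: p - _ - _]addrAC subrr add0r addrC.
Qed.

Lemma ishi (R : realType) (E : normedModType R) (y : nat -> E) (S : E -> E) (a : R) :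
 0 < a -> a < 1 ->
 (forall j, y j.+1 = a *: y j + (1 - a) *: S (y j)) ->
 (forall i j, `|S (y i) - S (y j)| <= `|y i - y j|) ->
 forall n i, a ^+ n * ((1 + n%:R * (1 - a)) * `|y i - S (y i)| - `|S (y (i + n)%N) - y i|)
   <= `|y i - S (y i)| - `|y (i + n)%N - S (y (i + n)%N)|.
Proof.
move=> a0 a1 hy hS.
pose d j := `|y j - S (y j)|.
have d0 : forall j, 0 <= d j by move=> j; exact: normr_ge0.
have step : forall j, `|y j - y j.+1| = (1 - a) * d j.
  move=> j; have h1a : `|1 - a| = 1 - a by apply: ger0_norm; lra.
  rewrite hy /d -h1a -normrZ scalerBr scalerBl scale1r opprD addrA; congr `|_|.
  by rewrite h1a.
have dmono : forall j, d j.+1 <= d j.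
  move=> j; rewrite /d.
  have -> : y j.+1 - S (y j.+1) = a *: (y j - S (y j)) + (S (y j) - S (y j.+1)).
    rewrite hy scalerBr scalerBl scale1r.
    rewrite !addrA; congr (_ - _); by rewrite addrAC.
  apply: le_trans (ler_normD _ _) _; rewrite normrZ ger0_norm; last lra.
  have := hS j j.+1; rewrite step; rewrite -/(d j). nra.
have dmono' : forall i m, d (i + m)%N <= d i.
  move=> i; elim=> [|m IH]; first by rewrite addn0.
  by rewrite addnS; apply: le_trans (dmono _) IH.
have F3 : forall i m, `|y (i + m)%N - y i| <= m%:R * (1 - a) * d i.
  move=> i; elim=> [|m IH]; first by rewrite addn0 subrr normr0 !mul0r.
  rewrite addnS.
  have := ler_normD (y (i + m).+1 - y (i + m)%N) (y (i + m)%N - y i).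
  rewrite addrA subrK [`|y (i + m).+1 - _|]distrC step.
  have := dmono' i m.
  have : 0 <= 1 - a by lra.
  rewrite -natr1. nra.
have F4 : forall n, a ^+ n * (1 + n%:R * (1 - a)) <= 1.
  elim=> [|n IH]; first by rewrite expr0 mul0r addr0 mulr1.
  have P0 : 0 <= a ^+ n by apply: exprn_ge0; lra.
  rewrite exprS -natr1.
  have : a * (1 + (n%:R + 1) * (1 - a)) <= 1 + n%:R * (1 - a).
    have : (0:R) <= (1 - a) ^+ 2 * (n%:R + 1) by apply: mulr_ge0; [apply: sqr_ge0 | have : (0:R) <= n%:R by []; lra].
    nra.
  move=> h; have := ler_wpM2l P0 h. nra.
have key : forall i m, `|S (y m) - y i.+1| <= a * `|S (y m) - y i| + (1 - a) * `|S (y m) - S (y i)|.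
  move=> i m.
  rewrite hy comb_id.
  apply: le_trans (ler_normD _ _) _; rewrite !normrZ !ger0_norm //; lra.
elim=> [|n IH] i.
  by rewrite expr0 mul0r addr0 mul1r mul1r addn0 distrC.
have IH1 : a ^+ n * ((1 + n%:R * (1 - a)) * d i.+1 - `|S (y (i + n.+1)%N) - y i.+1|) <= d i.+1 - d (i + n.+1)%N.
  by have := IH i.+1; rewrite addSnnS.
change (a ^+ n.+1 * ((1 + n.+1%:R * (1 - a)) * d i - `|S (y (i + n.+1)%N) - y i|) <= d i - d (i + n.+1)%N).
have k1 := key i (i + n.+1)%N.
set m := (i + n.+1)%N in IH1 k1 *.
set X := `|S (y m) - y i| in k1 *; set Y := `|S (y m) - y i.+1| in IH1 k1 *.
have k2 : `|S (y m) - S (y i)| <= n.+1%:R * (1 - a) * d i.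
  apply: le_trans (hS _ _) _; exact: F3.
have P0 : 0 <= a ^+ n by apply: exprn_ge0; lra.
have f4 := F4 n.
have di := dmono i.
have h1 : 0 <= a ^+ n * (a * X - Y + (1 - a) * (n.+1%:R * (1 - a) * d i)).
  apply: mulr_ge0 => //.
  have : 0 <= 1 - a by lra.
  nra.
have h2 : 0 <= (1 - a ^+ n * (1 + n%:R * (1 - a))) * (d i - d i.+1).
  apply: mulr_ge0; lra.
rewrite exprS -natr1 in h1 *.
nra.
Qed.

Lemma ex_nat_gt (R:realType) (x:R) : exists n : nat, x < n%:R.
Proof. exists (Num.Def.archi_bound `|x|); exact: le_lt_trans (ler_norm x) (archi_boundP (normr_ge0 x)). Qed.

Lemma ex_nat_gt_mul (R:realType) (x d:R) : 0 < d -> exists n : nat, x < d * n.+1%:R.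
Proof.
move=> d0; have [n hn] := ex_nat_gt _ (x / d).
exists n; have e : d * d^-1 = 1 by apply: mulfV; lra.
have : x / d < n.+1%:R by apply: lt_le_trans hn _; rewrite ler_nat.
have ex : d * (x / d) = x by rewrite mulrC divfK // gt_eqF.
by move=> h; rewrite -[X in X < _]ex ltr_pM2l.
Qed.

Lemma firm_arith (R:realType) (dl M : R) : 0 < dl -> 0 <= M ->
 (forall N K : nat, (0 < N)%N -> (0 < K)%N ->
    2 * N%:R * K%:R * dl <= 2 * M * (2 * N%:R + 2 * K%:R * (K%:R - 1))) -> False.
Proof.
move=> d0 M0 h.
have [K0 hK] := ex_nat_gt_mul _ (4 * M) _ d0.
have [N0 hN] := ex_nat_gt_mul _ (4 * M * K0.+1%:R) _ d0.
have := h N0.+1 K0.+1 erefl erefl.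
have : (0:R) < N0.+1%:R by rewrite ltr0n.
have : (0:R) < K0.+1%:R by rewrite ltr0n.
move: hK hN; set K := K0.+1%:R; set N := N0.+1%:R => hK hN Kp Np.
nra.
Qed.

Lemma avg_arith (R:realType) (a et Bd : R) : 0 < a -> a < 1 -> 0 < et ->
  (forall n : nat, forall eps : R, 0 < eps -> a ^+ n * ((1 + n%:R * (1 - a)) * et - Bd) <= eps) -> False.
Proof.
move=> a0 a1 e0 h.
have le0 : 0 < (1 - a) * et by apply: mulr_gt0; lra.
have [m hm] := ex_nat_gt_mul _ Bd _ le0.
have P : 0 < a ^+ m.+1 by apply: exprn_gt0.
have c0 : 0 < (1 + m.+1%:R * (1 - a)) * et - Bd by nra.
have := h m.+1 _ (divr_gt0 (mulr_gt0 P c0) (ltr0n R 2)).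
set c := _ - Bd in c0 *; set P' := a ^+ m.+1 in P *.
move=> h'; have : P' * c <= 0 by lra.
by move=> /le_lt_trans /(_ (mulr_gt0 P c0)); rewrite ltxx.
Qed.

Lemma slow_incr (R:realType) (e : nat -> R) (U : R) : (forall k, e k <= e k.+1) ->
  (forall k, 0 <= e k) -> (forall k, e k <= U) ->
  forall n eps, 0 < eps -> exists N, e (N + n)%N - e N <= eps.
Proof.
move=> mono pos bd n eps ep; apply: contrapT => hn.
have h : forall N, eps < e (N + n)%N - e N.
  move=> N; rewrite ltNge; apply/negP => hle; apply: hn; by exists N.
have g : forall m : nat, e 0%N + m%:R * eps <= e (m * n)%N.
  elim=> [|m IH]; first by rewrite mul0n mul0r addr0.
  rewrite mulSn addnC -natr1; have := h (m * n)%N; lra.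
have [m hm] := ex_nat_gt_mul _ U _ ep.
have := g m.+1; have := bd (m.+1 * n)%N; have := pos 0%N; nra.
Qed.

Lemma dmono1 (R : realType) (E : normedModType R) (S : E -> E) (a : R) (u v : E) :
  0 < a -> a < 1 -> v = a *: u + (1 - a) *: S u -> `|S u - S v| <= `|u - v| ->
  `|v - S v| <= `|u - S u|.
Proof.
move=> a0 a1 hv hS.
have step : `|u - v| = (1 - a) * `|u - S u|.
  have h1a : `|1 - a| = 1 - a by apply: ger0_norm; lra.
  by rewrite hv comb_id subrr scaler0 add0r normrZ h1a.
have -> : v - S v = a *: (u - S u) + (S u - S v).
  rewrite hv scalerBr scalerBl scale1r.
  rewrite !addrA; congr (_ - _); by rewrite addrAC.
apply: le_trans (ler_normD _ _) _; rewrite normrZ ger0_norm; last lra.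
have := normr_ge0 (u - S u). nra.
Qed.

Theorem theorem3p3 (R : realType) (E : completeNormedModType R)
  (C : set E) (T : E -> E) :
  (firmly_nonexpansive C T \/ (convex_subset C /\ averaged_nonexpansive C T)) ->
  forall D : set E, D `<=` C -> D !=set0 -> bounded_subset D -> T @` D = D ->
    D `<=` Fix C T /\ Fix C T !=set0.
Proof.
move=> hT D DC [x0 Dx0] [M hM] TD.
have TDD : forall z, D z -> D (T z) by move=> z Dz; rewrite -TD; exists z.
have pre : forall z, D z -> exists w, D w /\ T w = z.
  by move=> z; rewrite -{1}TD => -[w Dw <-]; exists w.
have [p hp] : exists p : E -> E, forall z, D z -> D (p z) /\ T (p z) = z.
  have [f hf] := @choice E E (fun z w => D z -> D w /\ T w = z) (fun z =>
    match pselect (D z) with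
    | left Dz => let: ex_intro w hw := pre z Dz in ex_intro _ w (fun _ => hw)
    | right nDz => ex_intro _ z (fun Dz => False_ind _ (nDz Dz))
    end).
  by exists f.
have M0 : 0 <= M by apply: le_trans (normr_ge0 _) (hM _ Dx0).
have dist : forall u v, D u -> D v -> `|u - v| <= 2 * M.
  move=> u v Du Dv; apply: le_trans (ler_normB _ _) _.
  have := hM _ Du; have := hM _ Dv; lra.
have Dit : forall j u, D u -> D (iter j T u).
  by elim=> [|j IH] u Du //=; apply: TDD; apply: IH.
have Dxs : forall x, D x -> forall k, D (iter k p x).
  by move=> x Dx; elim=> [|k IH] //=; case: (hp _ IH).
have back : forall x, D x -> forall j m, iter j T (iter (j + m) p x) = iter m p x.
  move=> x Dx; elim=> [|j IH] m; first by rewrite add0n.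
  rewrite iterSr addSn iterS; case: (hp _ (Dxs x Dx (j + m)%N)) => _ ->.
  exact: IH.
have sub : D `<=` Fix C T.
  move=> x Dx; split; first exact: DC.
  apply/eqP; rewrite -subr_eq0 -normr_le0; rewrite leNgt; apply/negP => dpos.
  case: hT => [[_ hf] | [_ [_ [a [a0 [a1 [S [SC [Sne Sform]]]]]]]]].
  - apply: (firm_arith _ _ _ dpos M0) => N K N0 K0.
    pose z j := iter j T (iter N p x).
    have Dz : forall j, D (z j) by move=> j; apply: Dit; apply: Dxs.
    have hf' : forall i j, `|z i.+1 - z j.+1| <=
        `|(1/2:R) *: (z i - z j) + (1 - 1/2) *: (z i.+1 - z j.+1)|.
      move=> i j; rewrite /z !iterS; apply: hf;
        [apply: DC; apply: Dit; exact: Dxs | apply: DC; apply: Dit; exact: Dxs | lra | lra].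
    have hB : forall i j, `|z i - z j| <= 2 * M by move=> i j; apply: dist.
    have := @kob_bound _ _ z (2 * M) N K hf' hB K0 N (leqnn N) 1%N K0.
    have zN : z N = x by rewrite /z -{2}(addn0 N) back.
    rewrite /z addn1 iterS -/(z N) zN distrC.
    have -> : psi R N K N 1 = 2 * N%:R + 2 * K%:R * (K%:R - 1) by rewrite /psi; ring.
    by rewrite [_ * `|_|]mulrC mulrA.
  - have Tf : forall u, D u -> T u = a *: u + (1 - a) *: S u by move=> u Du; apply: Sform; apply: DC.
    have h1a : `|1 - a| = 1 - a by apply: ger0_norm; lra.
    have disp : forall u, D u -> `|u - T u| = (1 - a) * `|u - S u|.
      by move=> u Du; rewrite Tf // comb_id subrr scaler0 add0r normrZ h1a.
    pose e k := `|iter k p x - S (iter k p x)|.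
    have e0 : forall k, 0 <= e k by move=> k; exact: normr_ge0.
    have emono : forall k, e k <= e k.+1.
      move=> k; rewrite /e.
      have Dk := Dxs x Dx k.+1.
      have ek : iter k p x = T (iter k.+1 p x) by rewrite iterS; case: (hp _ (Dxs x Dx k)) => _ ->.
      apply: (dmono1 _ _ _ _ _ _ a0 a1); first by rewrite ek Tf.
      by apply: Sne; apply: DC => //; apply: Dxs.
    have emono' : forall k, e 0%N <= e k.
      by elim=> [|k IH] //; apply: le_trans IH (emono k).
    have la : 0 < 1 - a by lra.
    have ebd : forall k, e k <= 2 * M / (1 - a).
      move=> k; rewrite ler_pdivlMr // mulrC.
      have Dk := Dxs x Dx k.
      rewrite /e -disp //; apply: dist => //; exact: TDD.
    have etapos : 0 < e 0%N.
      have : `|x - T x| = (1 - a) * e 0%N by rewrite /e /= disp.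
      rewrite distrC => h; rewrite h in dpos.
      by rewrite (pmulr_rgt0 _ la) in dpos.
    apply: (@avg_arith R a (e 0%N) (2 * M / (1 - a) + 2 * M) a0 a1 etapos) => n eps epsp.
    have [N hN] := slow_incr _ _ _ emono e0 ebd n _ epsp.
    pose y j := iter j T (iter (N + n)%N p x).
    have Dy : forall j, D (y j) by move=> j; apply: Dit; apply: Dxs.
    have hy : forall j, y j.+1 = a *: y j + (1 - a) *: S (y j) by move=> j; rewrite /y iterS Tf //; apply: Dit; exact: Dxs.
    have hS : forall i j, `|S (y i) - S (y j)| <= `|y i - y j|.
      by move=> i j; apply: Sne; [apply: DC; apply: Dy | apply: DC; apply: Dy].
    have := ishi _ _ _ _ _ a0 a1 hy hS n 0%N.
    rewrite add0n.
    have yn : y n = iter N p x by rewrite /y addnC back.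
    have y0 : y 0%N = iter (N + n)%N p x by [].
    rewrite yn y0 -/(e N) -/(e (N + n)%N) => hI.
    have X : `|S (iter N p x) - iter (N + n)%N p x| <= 2 * M / (1 - a) + 2 * M.
      apply: le_trans (ler_distD (iter N p x) _ _) _.
      have := ebd N; rewrite /e distrC.
      have := dist _ _ (Dxs x Dx N) (Dxs x Dx (N + n)%N). lra.
    have P0 : 0 <= a ^+ n by apply: exprn_ge0; lra.
    have c : (1 + n%:R * (1 - a)) * e 0%N - (2 * M / (1 - a) + 2 * M) <=
             (1 + n%:R * (1 - a)) * e (N + n)%N - `|S (iter N p x) - iter (N + n)%N p x|.
      have := emono' (N + n)%N.
      have : 0 <= 1 + n%:R * (1 - a) by have : (0:R) <= n%:R by []; nra.
      nra.
    apply: le_trans (ler_wpM2l P0 c) _.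
    by apply: le_trans hI hN.
split; first exact: sub.
by exists x0; apply: sub.
Qed.
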